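(* Consider the discrete setting described in the context, with a fixed constant $\rho_\infty^*>0$. For every initial datum $(f^0_{ij},g^0_{ij})_{i\in\mathcal I,j\in\mathcal J}$, the linearized scheme $$\frac{f^{n+1}_{ij}-f^n_{ij}}{\Delta t}+\frac{1}{\Delta x\,\Delta v}\big(\mathcal F^{n+1}_{i+\frac12,j}-\mathcal F^{n+1}_{i-\frac12,j}\big)=-\rho_\infty^*\chi_{1,j}\rho^{n+1}_{g,i}-(\rho_\infty^* )^{-1}f^{n+1}_{ij},$$ $$\frac{g^{n+1}_{ij}-g^n_{ij}}{\Delta t}+\frac{1}{\Delta x\,\Delta v}\big(\mathcal G^{n+1}_{i+\frac12,j}-\mathcal G^{n+1}_{i-\frac12,j}\big)=-(\rho_\infty^* )^{-1}\chi_{2,j}\rho^{n+1}_{f,i}-\rho_\infty^*\,g^{n+1}_{ij}$$ ($n\ge0$, $i\in\mathcal I$, $j\in\mathcal J$) admits a unique solution $(f^n_{ij},g^n_{ij})_{n\ge0,i\in\mathcal I,j\in\mathcal J}$.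
   Context: Space mesh: $N$ uniform cells of length $\Delta x$ of the torus, indexed by $i\in\mathcal I=\mathbb Z/N\mathbb Z$ (periodic). Velocity mesh: $\Delta v=v^*/L$, cells indexed by $j\in\mathcal J=\{-L+1,\dots,L\}$ with midpoints $v_j=(j-\tfrac12)\Delta v$. Time step $\Delta t>0$; $\lambda=\Delta x/(2\Delta t)>0$. For $k=1,2$, $\chi_{k,j}>0$, $\chi_{k,j}=\chi_{k,1-j}$, $\sum_j\Delta v\,\chi_{k,j}=1$. Densities $\rho_{f,i}=\sum_j\Delta v\,f_{ij}$, $\rho_{g,i}=\sum_j\Delta v\,g_{ij}$. Fluxes: $\mathcal F^{n+1}_{i+\frac12,j}=\Delta v\frac{v_j}{2}(f^{n+1}_{i+1,j}+f^{n+1}_{ij})-\Delta v\,\lambda(f^{n+1}_{i+1,j}-f^{n+1}_{ij})$, and $\mathcal G$ the same with $g$ in place of $f$. *)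

(* Defs.v *)
From mathcomp Require Import all_boot all_order all_algebra.
Set Implicit Arguments. Unset Strict Implicit. Unset Printing Implicit Defensive.
Import Order.TTheory GRing.Theory Num.Theory.
Local Open Scope ring_scope.

(* Space cells: i : 'I_N (periodic, via ordS / ord_pred).
   Velocity cells: k : 'I_(2*L) encodes the paper's index j = k - L + 1,
   so j ranges over {-L+1, ..., L}. *)

Section Scheme.
Variable R : realFieldType.

(* midpoint v_j = (j - 1/2) dv  with j = k - L + 1 *)
Definition vmid (L : nat) (dv : R) (k : 'I_(2 * L)) : R :=
  ((k : nat)%:R - L%:R + 2^-1) * dv.

Definition dens (N L : nat) (dv : R) (f : 'I_N -> 'I_(2 * L) -> R) (i : 'I_N) : R :=
  \sum_(k < 2 * L) dv * f i k.

Definition flux (N L : nat) (dv lam : R) (f : 'I_N -> 'I_(2 * L) -> R)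
    (i : 'I_N) (k : 'I_(2 * L)) : R :=
  dv * (vmid dv k / 2) * (f (ordS i) k + f i k) - dv * lam * (f (ordS i) k - f i k).

Definition lin_scheme (N L : nat) (dx dv dt rinf : R) (chi1 chi2 : 'I_(2 * L) -> R)
    (f g : nat -> 'I_N -> 'I_(2 * L) -> R) : Prop :=
  let lam := dx / (2 * dt) in
  forall (n : nat) (i : 'I_N) (k : 'I_(2 * L)),
    (f n.+1 i k - f n i k) / dt
      + (dx * dv)^-1 * (flux dv lam (f n.+1) i k - flux dv lam (f n.+1) (ord_pred i) k)
      = - rinf * chi1 k * dens dv (g n.+1) i - rinf^-1 * f n.+1 i k
    /\
    (g n.+1 i k - g n i k) / dt
      + (dx * dv)^-1 * (flux dv lam (g n.+1) i k - flux dv lam (g n.+1) (ord_pred i) k)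
      = - rinf^-1 * chi2 k * dens dv (f n.+1) i - rinf * g n.+1 i k.

End Scheme.

(* Main.v *)
From HB Require Import structures.
Require Import Defs.
From mathcomp Require Import all_boot all_order all_algebra.
From mathcomp Require Import ring lra.
Import Order.TTheory GRing.Theory Num.Theory.
Local Open Scope ring_scope.
Set Implicit Arguments. Unset Strict Implicit.


Lemma transport_nonneg (R : realFieldType) (N : nat) (dv s lam : R) (F fl : 'I_N -> R) :
  0 <= dv -> 0 <= lam ->
  (forall i, fl i = dv * (s / 2) * (F (ordS i) + F i) - dv * lam * (F (ordS i) - F i)) ->
  0 <= \sum_i F i * (fl i - fl (ord_pred i)).
Proof.
move=> hdv hlam hfl.
have E1 : \sum_i F i * fl (ord_pred i) = \sum_i F (ordS i) * fl i.
  rewrite [LHS](reindex_inj (@ordS_inj N)) /=; by under eq_bigr do rewrite ordSK.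
have E2 : \sum_i F (ordS i) ^+ 2 = \sum_i F i ^+ 2.
  by rewrite [RHS](reindex_inj (@ordS_inj N)).
have -> : \sum_i F i * (fl i - fl (ord_pred i)) =
   \sum_i (F i * fl i) - \sum_i F i * fl (ord_pred i).
  by rewrite -sumrB; apply: eq_bigr => i _; ring.
rewrite E1 -sumrB.
have -> : \sum_i (F i * fl i - F (ordS i) * fl i) =
  \sum_i (dv * (s/2) * (F i ^+ 2 - F (ordS i) ^+ 2) + dv * lam * (F (ordS i) - F i) ^+ 2).
  by apply: eq_bigr => i _; rewrite hfl; ring.
rewrite big_split /= -mulr_sumr sumrB E2 subrr mulr0 add0r.
apply: sumr_ge0 => i _; apply: mulr_ge0; [exact: mulr_ge0 | exact: sqr_ge0].
Qed.

Lemma cs_chi (R : realFieldType) (M : nat) (dv : R) (chi F : 'I_M -> R) :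
  0 < dv -> (forall k, 0 < chi k) -> \sum_k dv * chi k = 1 ->
  (\sum_k dv * F k) ^+ 2 <= dv * \sum_k F k ^+ 2 / chi k.
Proof.
move=> hdv hchi hm.
set rho := \sum_k dv * F k.
have H : 0 <= \sum_k dv * chi k * (F k / chi k - rho) ^+ 2.
  apply: sumr_ge0 => k _; apply: mulr_ge0; last exact: sqr_ge0.
  by apply: mulr_ge0; [exact: ltW | exact: ltW].
have E : \sum_k dv * chi k * (F k / chi k - rho) ^+ 2 =
   dv * \sum_k F k ^+ 2 / chi k - 2 * rho * \sum_k dv * F k + rho ^+ 2 * \sum_k dv * chi k.
  rewrite mulr_sumr mulr_sumr mulr_sumr -sumrB -big_split /=.
  apply: eq_bigr => k _; have := hchi k; rewrite lt0r => /andP[hk _]; field; exact: hk.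
by rewrite E hm -/rho in H; lra.
Qed.


Definition lhs1 (R : realFieldType) (N L : nat) (dx dv dt rinf : R) (chi1 : 'I_(2 * L) -> R)
  (F G : 'I_N -> 'I_(2 * L) -> R) i k :=
  F i k / dt + (dx * dv)^-1 * (flux dv (dx / (2 * dt)) F i k - flux dv (dx / (2 * dt)) F (ord_pred i) k)
  + rinf * chi1 k * dens dv G i + rinf^-1 * F i k.

Definition lhs2 (R : realFieldType) (N L : nat) (dx dv dt rinf : R) (chi2 : 'I_(2 * L) -> R)
  (F G : 'I_N -> 'I_(2 * L) -> R) i k :=
  G i k / dt + (dx * dv)^-1 * (flux dv (dx / (2 * dt)) G i k - flux dv (dx / (2 * dt)) G (ord_pred i) k)
  + rinf^-1 * chi2 k * dens dv F i + rinf * G i k.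

Lemma quad_aux (R : realFieldType) (x y p q dv r : R) :
  0 < dv -> 0 < r -> x ^+ 2 <= dv * p -> y ^+ 2 <= dv * q ->
  0 <= p / r ^+ 2 + r ^+ 2 * q + 2 * x * y / dv.
Proof.
move=> hdv hr hp hq.
have hr2 : 0 < r ^+ 2 by exact: exprn_gt0.
have h1 : 0 <= (x / r + r * y) ^+ 2 by exact: sqr_ge0.
have e1 : (x / r + r * y) ^+ 2 = x ^+ 2 / r ^+ 2 + r ^+ 2 * y ^+ 2 + 2 * x * y.
  by field; rewrite gt_eqF.
have h2 : x ^+ 2 / r ^+ 2 <= dv * p / r ^+ 2 by rewrite ler_pM2r ?invr_gt0.
have h3 : r ^+ 2 * y ^+ 2 <= r ^+ 2 * (dv * q) by rewrite ler_pM2l.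
have : 0 <= dv * (p / r ^+ 2 + r ^+ 2 * q + 2 * x * y / dv).
  have -> : dv * (p / r ^+ 2 + r ^+ 2 * q + 2 * x * y / dv) =
     dv * p / r ^+ 2 + r ^+ 2 * (dv * q) + 2 * x * y.
    by field; rewrite !gt_eqF.
  lra.
by rewrite pmulr_rge0.
Qed.


Lemma inj_core (R : realFieldType) (N L : nat) (dx dv dt rinf : R)
  (chi1 chi2 : 'I_(2 * L) -> R) (F G : 'I_N -> 'I_(2 * L) -> R) :
  0 < dx -> 0 < dv -> 0 < dt -> 0 < rinf ->
  (forall k, 0 < chi1 k) -> (forall k, 0 < chi2 k) ->
  \sum_k dv * chi1 k = 1 -> \sum_k dv * chi2 k = 1 ->
  (forall i k, lhs1 dx dv dt rinf chi1 F G i k = 0) ->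
  (forall i k, lhs2 dx dv dt rinf chi2 F G i k = 0) ->
  forall i k, F i k = 0 /\ G i k = 0.
Proof.
move=> hdx hdv hdt hr hc1 hc2 hm1 hm2 e1 e2.
have nc1 k : chi1 k != 0 by rewrite gt_eqF.
have nc2 k : chi2 k != 0 by rewrite gt_eqF.
have nr : rinf != 0 by rewrite gt_eqF.
have ndt : dt != 0 by rewrite gt_eqF.
have ndv : dv != 0 by rewrite gt_eqF.
have ndx : dx != 0 by rewrite gt_eqF.
set lam := dx / (2 * dt).
set a := (dx * dv)^-1.
set c := dt^-1.
pose DF i k := flux dv lam F i k - flux dv lam F (ord_pred i) k.
pose DG i k := flux dv lam G i k - flux dv lam G (ord_pred i) k.
pose rF i := dens dv F i.
pose rG i := dens dv G i.
pose SF i := \sum_k F i k ^+ 2 / chi1 k.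
pose SG i := \sum_k G i k ^+ 2 / chi2 k.
pose A i k := (c + rinf^-1) / rinf * (F i k ^+ 2 / chi1 k) + (c + rinf) * rinf * (G i k ^+ 2 / chi2 k)
   + rG i * F i k + rF i * G i k.
pose B i k := a / (rinf * chi1 k) * (F i k * DF i k) + a * rinf / chi2 k * (G i k * DG i k).
have PE i k : A i k + B i k = 0.
  have E : A i k + B i k = F i k / (chi1 k * rinf) * lhs1 dx dv dt rinf chi1 F G i k
     + G i k * rinf / chi2 k * lhs2 dx dv dt rinf chi2 F G i k.
    rewrite /A /B /DF /DG /rF /rG /lhs1 /lhs2 -/lam /a /c.
    by field; rewrite nc1 nc2 nr ndt ndx ndv.
  by rewrite E e1 e2 !mulr0 addr0.
have rFE i : rF i = dv * \sum_k F i k by rewrite /rF /dens mulr_sumr.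
have rGE i : rG i = dv * \sum_k G i k by rewrite /rG /dens mulr_sumr.
pose Q i := (c + rinf^-1) / rinf * SF i + (c + rinf) * rinf * SG i + 2 * rF i * rG i / dv.
have AE i : \sum_k A i k = Q i.
  rewrite /A !big_split /= -!mulr_sumr /Q /SF /SG.
  have eF : \sum_k F i k = rF i / dv by rewrite rFE; field; exact: ndv.
  have eG : \sum_k G i k = rG i / dv by rewrite rGE; field; exact: ndv.
  by rewrite eF eG; field; rewrite ndv nr.
have BT : 0 <= \sum_i \sum_k B i k.
  rewrite exchange_big /=; apply: sumr_ge0 => k _.
  rewrite /B big_split /= -!mulr_sumr.
  have ha : 0 <= a by rewrite /a invr_ge0; apply: mulr_ge0; apply: ltW.
  have hlam : 0 <= lam by rewrite /lam; apply: divr_ge0; [exact: ltW| apply: mulr_ge0 => //; exact: ltW].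
  apply: addr_ge0; apply: mulr_ge0.
  - by apply: divr_ge0 => //; apply: mulr_ge0; apply: ltW.
  - by apply: (@transport_nonneg _ _ dv (vmid dv k) lam (fun i => F i k) (fun i => flux dv lam F i k)) => //; exact: ltW.
  - by apply: divr_ge0; [apply: mulr_ge0 => //; exact: ltW | exact: ltW].
  - by apply: (@transport_nonneg _ _ dv (vmid dv k) lam (fun i => G i k) (fun i => flux dv lam G i k)) => //; exact: ltW.
have QB : \sum_i Q i + \sum_i \sum_k B i k = 0.
  rewrite -(eq_bigr _ (fun i _ => AE i)) -big_split /=.
  apply: big1 => i _; rewrite -big_split /=; apply: big1 => k _; exact: PE.
have SF0 i : 0 <= SF i by apply: sumr_ge0 => k _; apply: divr_ge0; [exact: sqr_ge0 | exact: ltW].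
have SG0 i : 0 <= SG i by apply: sumr_ge0 => k _; apply: divr_ge0; [exact: sqr_ge0 | exact: ltW].
have csF i : rF i ^+ 2 <= dv * SF i by apply: cs_chi.
have csG i : rG i ^+ 2 <= dv * SG i by apply: cs_chi.
have hc : 0 < c by rewrite /c invr_gt0.
have Qlow i : c / rinf * SF i + c * rinf * SG i <= Q i.
  have := quad_aux hdv hr (csF i) (csG i).
  have -> : Q i = c / rinf * SF i + c * rinf * SG i +
     (SF i / rinf ^+ 2 + rinf ^+ 2 * SG i + 2 * rF i * rG i / dv).
    by rewrite /Q; field; rewrite ndv nr.
  lra.
have Qge i : 0 <= Q i.
  apply: le_trans (Qlow i); apply: addr_ge0; apply: mulr_ge0 => //; apply: ltW.
    by rewrite divr_gt0.
  by rewrite mulr_gt0.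
have sQ : \sum_i Q i = 0.
  have hs : 0 <= \sum_i Q i by apply: sumr_ge0 => j _; exact: Qge.
  lra.
have Q0 i : Q i = 0 by apply: (psumr_eq0P (fun i _ => Qge i) sQ).
have hSF i : SF i = 0.
  have := Qlow i; rewrite Q0 => h.
  have h1 : 0 <= c / rinf * SF i by apply: mulr_ge0 => //; apply: ltW; rewrite divr_gt0.
  have h2 : 0 <= c * rinf * SG i by apply: mulr_ge0 => //; apply: ltW; rewrite mulr_gt0.
  have : c / rinf * SF i = 0 by lra.
  by move/eqP; rewrite mulf_eq0 (gt_eqF (divr_gt0 hc hr)) /= => /eqP.
have hSG i : SG i = 0.
  have := Qlow i; rewrite Q0 => h.
  have h1 : 0 <= c / rinf * SF i by apply: mulr_ge0 => //; apply: ltW; rewrite divr_gt0.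
  have h2 : 0 <= c * rinf * SG i by apply: mulr_ge0 => //; apply: ltW; rewrite mulr_gt0.
  have : c * rinf * SG i = 0 by lra.
  by move/eqP; rewrite mulf_eq0 (gt_eqF (mulr_gt0 hc hr)) /= => /eqP.
move=> i k; split.
- have t0 k' : 0 <= F i k' ^+ 2 / chi1 k' by apply: divr_ge0; [exact: sqr_ge0 | exact: ltW].
  have : F i k ^+ 2 / chi1 k = 0 by apply: (psumr_eq0P (fun k' _ => t0 k') (hSF i)).
  by move/eqP; rewrite mulf_eq0 invr_eq0 (negbTE (nc1 k)) orbF sqrf_eq0 => /eqP.
- have t0 k' : 0 <= G i k' ^+ 2 / chi2 k' by apply: divr_ge0; [exact: sqr_ge0 | exact: ltW].
  have : G i k ^+ 2 / chi2 k = 0 by apply: (psumr_eq0P (fun k' _ => t0 k') (hSG i)).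
  by move/eqP; rewrite mulf_eq0 invr_eq0 (negbTE (nc2 k)) orbF sqrf_eq0 => /eqP.
Qed.


Lemma inj_surj (K : fieldType) (vT : vectType K) (f : {linear vT -> vT}) :
  injective f -> forall y, exists x, f x = y.
Proof.
move=> finj y.
have g0 : lker (linfun f) == 0%VS.
  by apply/lker0P => u v; rewrite !lfunE; exact: finj.
exists ((linfun f)^-1%VF y).
by rewrite -[f _]lfunE /= (lker0_lfunVK g0).
Qed.

Section Lin.
Variables (R : realFieldType) (N L : nat) (dx dv dt rinf : R) (chi1 chi2 : 'I_(2 * L) -> R).

Definition Vt := ('M[R]_(N, 2 * L) * 'M[R]_(N, 2 * L))%type.

Definition Phi (p : Vt) : Vt :=
  (\matrix_(i, k) lhs1 dx dv dt rinf chi1 (fun i k => p.1 i k) (fun i k => p.2 i k) i k,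
   \matrix_(i, k) lhs2 dx dv dt rinf chi2 (fun i k => p.1 i k) (fun i k => p.2 i k) i k).

Lemma dens_lin (a : R) (F F' H : 'I_N -> 'I_(2 * L) -> R) i :
  (forall i k, H i k = a * F i k + F' i k) -> dens dv H i = a * dens dv F i + dens dv F' i.
Proof.
move=> hH; rewrite /dens mulr_sumr -big_split; apply: eq_bigr => k _; rewrite hH /=; ring.
Qed.

Lemma flux_lin (a lam : R) (F F' H : 'I_N -> 'I_(2 * L) -> R) i k :
  (forall i k, H i k = a * F i k + F' i k) ->
  flux dv lam H i k = a * flux dv lam F i k + flux dv lam F' i k.
Proof. move=> hH; rewrite /flux !hH; ring. Qed.

Lemma Phi_lin : linear_for *:%R Phi.
Proof.
move=> a u v; rewrite /Phi /=; congr pair; apply/matrixP => i k; rewrite !mxE.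
- rewrite /lhs1 (flux_lin _ _ (H := fun i k => (a *: u.1 + v.1) i k) (F := fun i k => u.1 i k) (F' := fun i k => v.1 i k) (a := a)); last by move=> ? ?; rewrite !mxE.
  rewrite (flux_lin _ _ (H := fun i k => (a *: u.1 + v.1) i k) (F := fun i k => u.1 i k) (F' := fun i k => v.1 i k) (a := a)); last by move=> ? ?; rewrite !mxE.
  rewrite (dens_lin _ (H := fun i k => (a *: u.2 + v.2) i k) (F := fun i k => u.2 i k) (F' := fun i k => v.2 i k) (a := a)); last by move=> ? ?; rewrite !mxE.
  rewrite !mxE; ring.
- rewrite /lhs2 (flux_lin _ _ (H := fun i k => (a *: u.2 + v.2) i k) (F := fun i k => u.2 i k) (F' := fun i k => v.2 i k) (a := a)); last by move=> ? ?; rewrite !mxE.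
  rewrite (flux_lin _ _ (H := fun i k => (a *: u.2 + v.2) i k) (F := fun i k => u.2 i k) (F' := fun i k => v.2 i k) (a := a)); last by move=> ? ?; rewrite !mxE.
  rewrite (dens_lin _ (H := fun i k => (a *: u.1 + v.1) i k) (F := fun i k => u.1 i k) (F' := fun i k => v.1 i k) (a := a)); last by move=> ? ?; rewrite !mxE.
  rewrite !mxE; ring.
Qed.

HB.instance Definition _ := GRing.isLinear.Build R Vt Vt *:%R Phi Phi_lin.

Lemma Phi_surj : injective Phi -> forall y, exists x, Phi x = y.
Proof. exact: (@inj_surj R Vt Phi). Qed.

End Lin.


Lemma Phi_inj (R : realFieldType) (N L : nat) (dx dv dt rinf : R) (chi1 chi2 : 'I_(2 * L) -> R) :
  0 < dx -> 0 < dv -> 0 < dt -> 0 < rinf ->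
  (forall k, 0 < chi1 k) -> (forall k, 0 < chi2 k) ->
  \sum_k dv * chi1 k = 1 -> \sum_k dv * chi2 k = 1 ->
  injective (@Phi R N L dx dv dt rinf chi1 chi2).
Proof.
move=> hdx hdv hdt hr hc1 hc2 hm1 hm2 u v huv.
have h0 : Phi dx dv dt rinf chi1 chi2 (u - v) = 0 by rewrite linearB /= huv subrr.
set w := u - v in h0.
have e1 i k : lhs1 dx dv dt rinf chi1 (fun i k => w.1 i k) (fun i k => w.2 i k) i k = 0.
  by have := congr1 (fun p : Vt R N L => p.1 i k) h0; rewrite /= !mxE.
have e2 i k : lhs2 dx dv dt rinf chi2 (fun i k => w.1 i k) (fun i k => w.2 i k) i k = 0.
  by have := congr1 (fun p : Vt R N L => p.2 i k) h0; rewrite /= !mxE.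
have := inj_core hdx hdv hdt hr hc1 hc2 hm1 hm2 e1 e2 => hz.
have wz1 : w.1 = 0 by apply/matrixP => i k; case: (hz i k) => -> _; rewrite mxE.
have wz2 : w.2 = 0 by apply/matrixP => i k; case: (hz i k) => _ ->; rewrite mxE.
apply/eqP; rewrite -subr_eq0 -/w; apply/eqP.
by rewrite [w]surjective_pairing wz1 wz2.
Qed.


Lemma Phi_solve (R : realFieldType) (N L : nat) (dx dv dt rinf : R) (chi1 chi2 : 'I_(2 * L) -> R)
  (hinj : injective (@Phi R N L dx dv dt rinf chi1 chi2)) y :
  Phi dx dv dt rinf chi1 chi2 (((linfun (@Phi R N L dx dv dt rinf chi1 chi2))^-1)%VF y) = y.
Proof.
have g0 : lker (linfun (@Phi R N L dx dv dt rinf chi1 chi2)) == 0%VS.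
  by apply/lker0P => a b; rewrite !lfunE; exact: hinj.
by rewrite -[Phi _ _ _ _ _ _ _]lfunE /= (lker0_lfunVK g0).
Qed.

Lemma lhs1_ext (R : realFieldType) (N L : nat) (dx dv dt rinf : R) (chi1 : 'I_(2 * L) -> R)
  (F G F' G' : 'I_N -> 'I_(2 * L) -> R) i k :
  (forall i k, F i k = F' i k) -> (forall i k, G i k = G' i k) ->
  lhs1 dx dv dt rinf chi1 F G i k = lhs1 dx dv dt rinf chi1 F' G' i k.
Proof.
move=> hF hG; rewrite /lhs1 /flux /dens !hF.
by congr (_ + _ + _ * _ + _); apply: eq_bigr => k' _; rewrite hG.
Qed.

Lemma lhs2_ext (R : realFieldType) (N L : nat) (dx dv dt rinf : R) (chi2 : 'I_(2 * L) -> R)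
  (F G F' G' : 'I_N -> 'I_(2 * L) -> R) i k :
  (forall i k, F i k = F' i k) -> (forall i k, G i k = G' i k) ->
  lhs2 dx dv dt rinf chi2 F G i k = lhs2 dx dv dt rinf chi2 F' G' i k.
Proof.
move=> hF hG; rewrite /lhs2 /flux /dens !hG.
by congr (_ + _ + _ * _ + _); apply: eq_bigr => k' _; rewrite hF.
Qed.

Lemma eq1_iff (R : realFieldType) (N L : nat) (dx dv dt rinf : R) (chi1 : 'I_(2 * L) -> R)
  (F0 F1 G1 : 'I_N -> 'I_(2 * L) -> R) i k :
  ((F1 i k - F0 i k) / dt
      + (dx * dv)^-1 * (flux dv (dx / (2 * dt)) F1 i k - flux dv (dx / (2 * dt)) F1 (ord_pred i) k)
      = - rinf * chi1 k * dens dv G1 i - rinf^-1 * F1 i k)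
  <-> lhs1 dx dv dt rinf chi1 F1 G1 i k = F0 i k / dt.
Proof.
set X := (dx * dv)^-1 * _.
have E : (F1 i k - F0 i k) / dt + X - (- rinf * chi1 k * dens dv G1 i - rinf^-1 * F1 i k)
   = lhs1 dx dv dt rinf chi1 F1 G1 i k - F0 i k / dt by rewrite /lhs1 -/X; ring.
split => h.
- by apply/eqP; rewrite -subr_eq0 -E h subrr.
- by apply/eqP; rewrite -subr_eq0 E h subrr.
Qed.

Lemma eq2_iff (R : realFieldType) (N L : nat) (dx dv dt rinf : R) (chi2 : 'I_(2 * L) -> R)
  (G0 F1 G1 : 'I_N -> 'I_(2 * L) -> R) i k :
  ((G1 i k - G0 i k) / dt
      + (dx * dv)^-1 * (flux dv (dx / (2 * dt)) G1 i k - flux dv (dx / (2 * dt)) G1 (ord_pred i) k)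
      = - rinf^-1 * chi2 k * dens dv F1 i - rinf * G1 i k)
  <-> lhs2 dx dv dt rinf chi2 F1 G1 i k = G0 i k / dt.
Proof.
set X := (dx * dv)^-1 * _.
have E : (G1 i k - G0 i k) / dt + X - (- rinf^-1 * chi2 k * dens dv F1 i - rinf * G1 i k)
   = lhs2 dx dv dt rinf chi2 F1 G1 i k - G0 i k / dt by rewrite /lhs2 -/X; ring.
split => h.
- by apply/eqP; rewrite -subr_eq0 -E h subrr.
- by apply/eqP; rewrite -subr_eq0 E h subrr.
Qed.

Lemma Phi_entry1 (R : realFieldType) (N L : nat) (dx dv dt rinf : R) (chi1 chi2 : 'I_(2 * L) -> R)
  (p : Vt R N L) i k :
  (Phi dx dv dt rinf chi1 chi2 p).1 i k = lhs1 dx dv dt rinf chi1 (fun i k => p.1 i k) (fun i k => p.2 i k) i k.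
Proof. by rewrite /Phi /= mxE. Qed.

Lemma Phi_entry2 (R : realFieldType) (N L : nat) (dx dv dt rinf : R) (chi1 chi2 : 'I_(2 * L) -> R)
  (p : Vt R N L) i k :
  (Phi dx dv dt rinf chi1 chi2 p).2 i k = lhs2 dx dv dt rinf chi2 (fun i k => p.1 i k) (fun i k => p.2 i k) i k.
Proof. by rewrite /Phi /= mxE. Qed.

Lemma Phi_eq (R : realFieldType) (N L : nat) (dx dv dt rinf : R) (chi1 chi2 : 'I_(2 * L) -> R)
  (p y : Vt R N L) :
  (forall i k, lhs1 dx dv dt rinf chi1 (fun i k => p.1 i k) (fun i k => p.2 i k) i k = y.1 i k) ->
  (forall i k, lhs2 dx dv dt rinf chi2 (fun i k => p.1 i k) (fun i k => p.2 i k) i k = y.2 i k) ->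
  Phi dx dv dt rinf chi1 chi2 p = y.
Proof.
move=> h1 h2; rewrite [y]surjective_pairing /Phi; congr pair; apply/matrixP => i k; rewrite mxE.
- exact: h1.
- exact: h2.
Qed.

Unset Implicit Arguments. Set Strict Implicit.

Theorem corollary4p2 (R : realFieldType) (N L : nat) (dx vstar dt rinf : R)
    (chi1 chi2 : 'I_(2 * L) -> R)
    (hN : (0 < N)%N) (hL : (0 < L)%N)
    (hdx : 0 < dx) (hvstar : 0 < vstar) (hdt : 0 < dt) (hrinf : 0 < rinf)
    (hchi1pos : forall k, 0 < chi1 k) (hchi2pos : forall k, 0 < chi2 k)
    (hchi1sym : forall k, chi1 k = chi1 (rev_ord k))
    (hchi2sym : forall k, chi2 k = chi2 (rev_ord k))
    (hchi1mass : \sum_(k < 2 * L) (vstar / L%:R) * chi1 k = 1)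
    (hchi2mass : \sum_(k < 2 * L) (vstar / L%:R) * chi2 k = 1)
    (f0 g0 : 'I_N -> 'I_(2 * L) -> R) :
  exists f g : nat -> 'I_N -> 'I_(2 * L) -> R,
    [/\ f 0%N = f0, g 0%N = g0,
        lin_scheme dx (vstar / L%:R) dt rinf chi1 chi2 f g &
        forall f' g' : nat -> 'I_N -> 'I_(2 * L) -> R,
          f' 0%N = f0 -> g' 0%N = g0 ->
          lin_scheme dx (vstar / L%:R) dt rinf chi1 chi2 f' g' ->
          forall n i k, f' n i k = f n i k /\ g' n i k = g n i k].
Proof.
set dv := vstar / L%:R.
have hdv : 0 < dv by rewrite /dv divr_gt0 // ltr0n.
pose P := @Phi R N L dx dv dt rinf chi1 chi2.
have hinj : injective P by exact: (Phi_inj hdx hdv hdt hrinf hchi1pos hchi2pos hchi1mass hchi2mass).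
pose sol y := (((linfun P)^-1)%VF y).
pose M (F : 'I_N -> 'I_(2 * L) -> R) : 'M[R]_(N, 2 * L) := \matrix_(i, k) F i k.
pose sq := fix sq n : Vt R N L :=
  if n is n'.+1 then sol (dt^-1 *: (sq n').1, dt^-1 *: (sq n').2) else (M f0, M g0).
pose f n := if n is 0%N then f0 else fun i k => (sq n).1 i k.
pose g n := if n is 0%N then g0 else fun i k => (sq n).2 i k.
have fE n i k : f n i k = (sq n).1 i k by case: n => [|n] //=; rewrite mxE.
have gE n i k : g n i k = (sq n).2 i k by case: n => [|n] //=; rewrite mxE.
have step n : P (sq n.+1) = (dt^-1 *: (sq n).1, dt^-1 *: (sq n).2) := Phi_solve hinj _.
have L1 n i k : lhs1 dx dv dt rinf chi1 (f n.+1) (g n.+1) i k = f n i k / dt.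
  have h : (P (sq n.+1)).1 i k = (dt^-1 *: (sq n).1) i k by rewrite step.
  rewrite Phi_entry1 mxE in h.
  by rewrite fE mulrC -h.
have L2 n i k : lhs2 dx dv dt rinf chi2 (f n.+1) (g n.+1) i k = g n i k / dt.
  have h : (P (sq n.+1)).2 i k = (dt^-1 *: (sq n).2) i k by rewrite step.
  rewrite Phi_entry2 mxE in h.
  by rewrite gE mulrC -h.
exists f, g; split => //.
- by move=> n i k; split; [apply/eq1_iff; exact: L1 | apply/eq2_iff; exact: L2].
move=> f' g' hf' hg' hs n; elim: n => [|n IH] i k; first by rewrite hf' hg'.
have hs1 i' k' : lhs1 dx dv dt rinf chi1 (f' n.+1) (g' n.+1) i' k' = f n i' k' / dt.
  by have [h _] := hs n i' k'; move/eq1_iff: h => ->; case: (IH i' k') => ->.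
have hs2 i' k' : lhs2 dx dv dt rinf chi2 (f' n.+1) (g' n.+1) i' k' = g n i' k' / dt.
  by have [_ h] := hs n i' k'; move/eq2_iff: h => ->; case: (IH i' k') => _ ->.
have hu : P (M (f' n.+1), M (g' n.+1)) = P (sq n.+1).
  rewrite step; apply: Phi_eq => i' k' /=.
  - rewrite (@lhs1_ext _ _ _ _ _ _ _ _ _ _ (f' n.+1) (g' n.+1)); last by move=> ? ?; rewrite mxE.
      by rewrite hs1 !mxE fE mulrC.
    by move=> ? ?; rewrite mxE.
  - rewrite (@lhs2_ext _ _ _ _ _ _ _ _ _ _ (f' n.+1) (g' n.+1)); last by move=> ? ?; rewrite mxE.
      by rewrite hs2 !mxE gE mulrC.
    by move=> ? ?; rewrite mxE.
have E := hinj _ _ hu.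
have e1 : (M (f' n.+1)) i k = (sq n.+1).1 i k by rewrite -E.
have e2 : (M (g' n.+1)) i k = (sq n.+1).2 i k by rewrite -E.
rewrite !mxE in e1 e2.
by rewrite fE gE e1 e2.
Qed.
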